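(* Let $F$ be a $4$-flipclass of $\mathfrak S_n$. Then the support graph $S_F$ and the time-support graph $TS_F$ are isomorphic (as edge-labelled directed graphs).
   Context: $\mathfrak S_n$ is the symmetric group on $[n]$, $T$ its transpositions, $\ell$ the length w.r.t. simple transpositions. The Bruhat graph $B(\mathfrak S_n)$ has an edge $x\xrightarrow{t}y$ iff $yx^{-1}=t\in T$ and $\ell(x)<\ell(y)$. $P_h(u,v)$ is the set of paths $u=x_0\to\cdots\to x_h=v$ of length $h$. Between two fixed vertices there are $0$ or $2$ paths of length $2$; each is the flip of the other. The $i$-th flip operator $f_i$ ($i\in[h-1]$) on $P_h(u,v)$ replaces $x_{i-1}\to x_i\to x_{i+1}$ by its flip; the orbits of $\langle f_1,\dots,f_{h-1}\rangle$ on $P_h(u,v)$ are $h$-flipclasses. For a flipclass $F$, the support graph $S_F$ is the edge-labelled subgraph of $B(\mathfrak S_n)$ formed by all vertices and edges lying on paths of $F$; the time-support graph $TS_F$ has vertices $(a,i)$, $0\le i\le h$, such that some path $(x_0,\dots,x_h)\in F$ has $x_i=a$, and edges $(a,i)\xrightarrow{t}(b,i+1)$ whenever some path of $F$ contains the edge $x_i=a\xrightarrow{t}b=x_{i+1}$. *)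

(* Defs.v *)
From mathcomp Require Import all_boot all_order all_fingroup.
Set Implicit Arguments. Unset Strict Implicit. Unset Printing Implicit Defensive.

Section Bruhat.
Variable n : nat.
Local Notation perm := {perm 'I_n}.

Definition blen (s : perm) : nat :=
  #|[set ij : 'I_n * 'I_n | (ij.1 < ij.2) && (s ij.2 < s ij.1)]|.

Definition is_transp (t : perm) : bool :=
  [exists i : 'I_n, exists j : 'I_n, (i != j) && (t == tperm i j)].

(* Label of x -> y: the permutation y x^{-1} (function composition).
   In mathcomp, (x^-1 * y) k = y (x^-1 k), i.e. x^-1 * y = y o x^{-1}. *)
Definition blabel (x y : perm) : perm := (x^-1 * y)%g.

Definition bedge (x y : perm) : bool := is_transp (blabel x y) && (blen x < blen y).

Variable h : nat.
Local Notation path_t := {ffun 'I_h.+1 -> perm}.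

Definition prv (i : 'I_h) : 'I_h.+1 := widen_ord (leqnSn h) i.
Definition nxt (i : 'I_h) : 'I_h.+1 := lift ord0 i.

Definition bpath (p : path_t) : bool :=
  [forall i : 'I_h, bedge (p (prv i)) (p (nxt i))].

(* q = f_i p for some i in [h-1]: q is the path obtained from p by replacing
   x_{i-1} -> x_i -> x_{i+1} by its flip (the other length-2 path between
   x_{i-1} and x_{i+1}), i.e. q differs from p exactly at the position i. *)
Definition flip_step (p q : path_t) : bool :=
  [&& bpath p, bpath q &
   [exists i : 'I_h.+1, [&& 0 < i, i < h, p i != q i &
                          [forall j : 'I_h.+1, (j != i) ==> (p j == q j)]]]].

Definition flipclass (F : {set path_t}) : Prop :=
  exists p : path_t, bpath p /\ F = [set q | connect flip_step p q].

Definition supV (F : {set path_t}) : {set perm} :=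
  \bigcup_(p in F) [set p i | i : 'I_h.+1].
Definition supE (F : {set path_t}) : {set perm * perm * perm} :=
  \bigcup_(p in F) [set (p (prv i), blabel (p (prv i)) (p (nxt i)), p (nxt i)) | i : 'I_h].

Definition tsupV (F : {set path_t}) : {set perm * 'I_h.+1} :=
  \bigcup_(p in F) [set (p i, i) | i : 'I_h.+1].
Definition tsupE (F : {set path_t}) : {set (perm * 'I_h.+1) * perm * (perm * 'I_h.+1)} :=
  \bigcup_(p in F) [set ((p (prv i), prv i), blabel (p (prv i)) (p (nxt i)), (p (nxt i), nxt i)) | i : 'I_h].

End Bruhat.

Definition lgraph_iso (V1 V2 L : finType) (A1 : {set V1}) (E1 : {set V1 * L * V1})
  (A2 : {set V2}) (E2 : {set V2 * L * V2}) : Prop :=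
  exists f : V1 -> V2,
    [/\ {in A1 &, injective f}, f @: A1 = A2,
        (forall e, e \in E1 -> (e.1.1 \in A1) && (e.2 \in A1)),
        (forall e, e \in E2 -> (e.1.1 \in A2) && (e.2 \in A2)) &
        (forall a b t, a \in A1 -> b \in A1 -> ((a, t, b) \in E1) = ((f a, t, f b) \in E2))].

(* Main.v *)
Require Import Defs.
From mathcomp Require Import all_boot all_order all_fingroup zify.
Set Implicit Arguments. Unset Strict Implicit. Unset Printing Implicit Defensive.


Section Inv.
Variable n : nat.
Local Notation perm := {perm 'I_n}.
Implicit Types (x y s : perm) (Y : {set 'I_n}).

Lemma posM x s k : (x * s)^-1%g k = x^-1%g (s^-1%g k).
Proof. by rewrite invMg permM. Qed.

Lemma posMt x i j k : (x * tperm i j)^-1%g k = x^-1%g (tperm i j k).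
Proof. by rewrite posM tpermV. Qed.

Definition invs Y x : {set 'I_n * 'I_n} :=
  [set kl | [&& kl.1 \in Y, kl.2 \in Y, kl.1 < kl.2 & x^-1%g kl.2 < x^-1%g kl.1]].

Lemma tperm_in Y i j k : i \in Y -> j \in Y -> (tperm i j k \in Y) = (k \in Y).
Proof. by move=> hi hj; case: tpermP => [->|->|]; rewrite ?hi ?hj. Qed.

Lemma inv_incr Y x i j : i \in Y -> j \in Y -> i < j -> x^-1%g i < x^-1%g j ->
  #|invs Y x| < #|invs Y (x * tperm i j)|.
Proof.
move=> hi hj hij hp.
set t := tperm i j.
pose g (kl : 'I_n * 'I_n) := if t kl.1 < t kl.2 then (t kl.1, t kl.2) else kl.
have ginj : {in invs Y x &, injective g}.
  move=> [a1 a2] [b1 b2]; rewrite !inE /= /g /=.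
  case/and4P=> _ _ ha _; case/and4P=> _ _ hb _.
  case: ifP; case: ifP => /= h1 h2 [e1 e2].
  - by rewrite (perm_inj e1) (perm_inj e2).
  - by move: h1; rewrite -e1 -e2 !tpermK ha.
  - by move: h2; rewrite e1 e2 !tpermK hb.
  - by rewrite e1 e2.
have hij' : (i, j) \in invs Y (x * t).
  by rewrite inE /= hi hj hij !posMt /t tpermL tpermR hp.
have hnin : (i, j) \notin invs Y x.
  by rewrite inE /= hi hj hij /= ltnNge ltnW.
have sub : g @: invs Y x \subset invs Y (x * t) :\ (i, j).
  apply/subsetP => _ /imsetP [[k l] hkl ->].
  move: (hkl); rewrite inE /= => /and4P [hk hl hlt hpl].
  rewrite /g /=; case: ifP => hc.
  - rewrite !inE /= !tperm_in // hk hl hc !posMt !tpermK hpl !andbT.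
    apply/negP => /eqP [e1 e2].
    have ek : k = j by rewrite -(tpermK i j k) -/t e1 /t tpermL.
    have el : l = i by rewrite -(tpermK i j l) -/t e2 /t tpermR.
    by move: hlt; rewrite ek el ltnNge ltnW.
  - rewrite !inE /= hk hl hlt !posMt /=.
    apply/andP; split.
      by apply/eqP => -[ek el]; move: hnin; rewrite -ek -el hkl.
    move: hc; rewrite /t.
    case: (tpermP i j k) => [ek|ek|nk1 nk2]; case: (tpermP i j l) => [el|el|nl1 nl2];
      rewrite ?tpermL ?tpermR ?(tpermD nk1 nk2) ?(tpermD nl1 nl2); subst => //;
      move=> /negbT; rewrite -leqNgt => ?; lia.
have := leq_trans (subset_leq_card sub) (leqnn _).
rewrite card_in_imset // => h.
apply: (leq_trans _ (leq_trans (ltnSn _) _)) ; first exact: h.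
by rewrite (cardsD1 (i, j) (invs Y (x * t))) hij'.
Qed.

Lemma blen_invs x : blen x = #|invs setT x|.
Proof.
rewrite /blen.
pose h (ij : 'I_n * 'I_n) := (x ij.2, x ij.1).
have hinj : injective h by move=> [a b] [c d] [e1 e2]; rewrite (perm_inj e1) (perm_inj e2).
rewrite -(card_imset _ hinj); apply: eq_card => -[k l].
rewrite [in RHS]inE /= !inE /=.
apply/imsetP/andP => [[[a b]] |[hkl hp]].
  by rewrite inE /= => /andP [hab hx] [-> ->]; rewrite !permK hx.
exists (x^-1%g l, x^-1%g k); first by rewrite inE /= !permKV hp.
by rewrite /h /= !permKV.
Qed.

Lemma labK x y : y = (x * blabel x y)%g.
Proof. by rewrite /blabel mulKVg. Qed.

Lemma bedge_tperm x i j : bedge x (x * tperm i j) -> i < j -> x^-1%g i < x^-1%g j.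
Proof.
case/andP=> _ hl hij; rewrite ltnNge leq_eqVlt; apply/negP => /orP [/eqP e|h].
  by move: hij; rewrite (perm_inj (val_inj e)) ltnn.
set y := (x * tperm i j)%g.
have : #|invs setT y| < #|invs setT (y * tperm i j)|.
  apply: inv_incr; rewrite ?inE //.
  by rewrite /y !posMt tpermL tpermR.
by rewrite /y -mulgA tperm2 mulg1 -!blen_invs ltnNge ltnW.
Qed.

Lemma transpP t : is_transp t -> exists i j : 'I_n, i < j /\ t = tperm i j.
Proof.
case/existsP=> i /existsP [j /andP [hij /eqP ->]].
case: (ltngtP i j) => h.
- by exists i, j.
- by exists j, i; rewrite tpermC.
- by move: hij; rewrite (val_inj h) eqxx.
Qed.

Lemma bedge_lab x y : bedge x y -> exists i j : 'I_n,
  [/\ i < j, blabel x y = tperm i j, y = (x * tperm i j)%g & x^-1%g i < x^-1%g j].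
Proof.
move=> he; case/andP: (he) => /transpP [i [j [hij ht]]] _.
exists i, j; split => //; first by rewrite -ht -labK.
by apply: bedge_tperm hij; rewrite -ht -labK.
Qed.

Lemma bedge_lt x y : bedge x y -> blen x < blen y.
Proof. by case/andP. Qed.

End Inv.


Section Tr.
Variable n : nat.
Local Notation perm := {perm 'I_n}.
Implicit Types (x y s r t : perm) (Y : {set 'I_n}).

Definition mv s : {set 'I_n} := [set k | s k != k].

Lemma mv_tperm (i j : 'I_n) : i != j -> mv (tperm i j) = [set i; j].
Proof.
move=> hij; apply/setP => k; rewrite !inE.
case: tpermP => [->|->|/eqP h1 /eqP h2].
- by rewrite eqxx eq_sym hij.
- by rewrite eqxx orbT hij.
- by rewrite eqxx (negbTE h1) (negbTE h2).
Qed.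

Lemma transpK s k : is_transp s -> s (s k) = k.
Proof. by case/transpP=> i [j [_ ->]]; rewrite tpermK. Qed.

Lemma transp2 s : is_transp s -> (s * s = 1)%g.
Proof. by case/transpP=> i [j [_ ->]]; rewrite tperm2. Qed.

Lemma transpV s : is_transp s -> (s^-1 = s)%g.
Proof. by case/transpP=> i [j [_ ->]]; rewrite tpermV. Qed.

Lemma transp_ne (i j : 'I_n) : i < j -> i != j.
Proof. by move=> h; rewrite -val_eqE /= neq_ltn h. Qed.

Lemma card_mv s : is_transp s -> #|mv s| = 2.
Proof.
case/transpP=> i [j [hij ->]]; rewrite mv_tperm ?transp_ne // cards2.
by rewrite transp_ne.
Qed.

Lemma transp_eq s k : is_transp s -> s k != k -> s = tperm k (s k).
Proof.
case/transpP=> i [j [hij ->]].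
case: tpermP => [->|->|_ _]; last by rewrite eqxx.
- by [].
- by rewrite tpermC.
Qed.

Lemma mv_in2 s k z : is_transp s -> k \in mv s -> z \in mv s -> (z == k) || (z == s k).
Proof.
rewrite !inE => hs hk; rewrite {1}(transp_eq hs hk).
case: (tpermP k (s k) z) => [e|e|_ _].
- by rewrite e eqxx.
- by rewrite e eqxx orbT.
- by rewrite eqxx.
Qed.

Lemma mv_img s k : is_transp s -> k \in mv s -> s k \in mv s.
Proof. by move=> hs; rewrite !inE transpK // eq_sym. Qed.

Lemma mv_eq s s' : is_transp s -> is_transp s' -> mv s = mv s' -> s = s'.
Proof.
move=> hs hs' e.
case/transpP: (hs) => i [j [hij es]].
have hi : i \in mv s' by rewrite -e es mv_tperm ?transp_ne // !inE eqxx.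
have hsi : s' i \in mv s by rewrite e mv_img.
have := hsi; rewrite es mv_tperm ?transp_ne // !inE => /orP [/eqP h|/eqP h].
  by move: hi; rewrite inE h eqxx.
have hi' : s' i != i by move: hi; rewrite inE.
by rewrite (transp_eq hs' hi') h.
Qed.

Lemma mv_mul s t : is_transp s -> is_transp t -> s != t -> mv (s * t)%g = mv s :|: mv t.
Proof.
move=> hs ht hst; apply/setP => k; rewrite !inE permM.
case: (eqVneq (s k) k) => [e|ne].
  by rewrite e.
rewrite /=; apply/negP => /eqP h.
have e2 : t k = s k by rewrite -{1}h transpK.
have ht' : t k != k by rewrite e2.
by move: hst; rewrite (transp_eq hs ne) (transp_eq ht ht') e2 eqxx.
Qed.

Lemma mv_fix s k : k \notin mv s -> s k = k.
Proof. by rewrite inE negbK => /eqP. Qed.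

End Tr.


Section Tri.
Variable n : nat.
Local Notation perm := {perm 'I_n}.
Implicit Types (x y s r t : perm) (Y : {set 'I_n}).

Definition pairs Y : {set 'I_n * 'I_n} :=
  [set kl | [&& kl.1 \in Y, kl.2 \in Y & kl.1 < kl.2]].

Lemma invs_pairs Y x : invs Y x \subset pairs Y.
Proof. by apply/subsetP => kl; rewrite !inE => /and4P [-> -> -> _]. Qed.

Lemma pairs3 Y : #|Y| = 3 -> #|pairs Y| <= 3.
Proof.
move=> hY.
set P := pairs Y.
pose sw (kl : 'I_n * 'I_n) := (kl.2, kl.1).
have swi : injective sw by move=> [a b] [c d] [-> ->].
set Q := sw @: P.
pose dg (k : 'I_n) := (k, k).
have dgi : injective dg by move=> a b [].
set D := dg @: Y.
have cQ : #|Q| = #|P| by rewrite card_imset.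
have cD : #|D| = 3 by rewrite card_imset.
have PQ : P :&: Q = set0.
  apply/setP => -[a b]; rewrite !inE; apply/negP => /andP [].
  rewrite /= => /and3P [_ _ hab] /imsetP [[c d]]; rewrite inE /= => /and3P [_ _ hcd] [e1 e2].
  by move: hab hcd; rewrite e1 e2 => h1 h2; move: (ltn_trans h1 h2); rewrite ltnn.
have PQD : (P :|: Q) :&: D = set0.
  apply/setP => -[a b]; rewrite !inE; apply/negP => /andP [].
  move=> h /imsetP [c _ [e1 e2]]; move: h; rewrite e1 e2 => /orP [].
    by rewrite /= ltnn !andbF.
  by case/imsetP => -[c1 d1]; rewrite inE /= => /and3P [_ _ h] [e3 e4]; move: h; rewrite -e3 -e4 ltnn.
have sub : (P :|: Q) :|: D \subset setX Y Y.
  apply/subsetP => -[a b]; rewrite !inE => /orP [/orP [|]|].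
  - by rewrite /= => /and3P [-> -> _].
  - by case/imsetP => -[c d]; rewrite inE /= => /and3P [hc hd _] [-> ->]; rewrite hc hd.
  - by case/imsetP => c hc [-> ->]; rewrite hc.
have := subset_leq_card sub; rewrite cardsX hY.
have h1 := cardsUI P Q; have h2 := cardsUI (P :|: Q) D.
rewrite PQ cards0 addn0 in h1; rewrite PQD cards0 addn0 h1 cQ cD in h2.
rewrite h2; lia.
Qed.

Lemma step_incr Y x y : bedge x y -> mv (blabel x y) \subset Y -> #|invs Y x| < #|invs Y y|.
Proof.
move=> he; case: (bedge_lab he) => i [j [hij hl hy hp]].
rewrite hl mv_tperm ?transp_ne // => /subsetP hs.
by rewrite hy; apply: inv_incr => //; apply: hs; rewrite !inE eqxx ?orbT.
Qed.


Lemma triangle x0 x1 x2 x3 t :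
  bedge x0 x1 -> bedge x1 x2 -> bedge x2 x3 -> is_transp t -> x3 = (x0 * t)%g ->
  exists Y : {set 'I_n}, [/\ #|Y| = 3, mv t \subset Y,
    [/\ mv (blabel x0 x1) \subset Y, mv (blabel x1 x2) \subset Y & mv (blabel x2 x3) \subset Y],
    (forall k l, k \in Y -> l \in Y -> k < l -> x0^-1%g k < x0^-1%g l /\ x3^-1%g l < x3^-1%g k) &
    (forall k l, k \in Y -> l \in Y ->
       connect (fun a b => (blabel x0 x1 a == b) || (blabel x1 x2 a == b)) k l)].
Proof.
move=> e1 e2 e3 ht h3.
set r1 := blabel x0 x1; set r2 := blabel x1 x2; set r3 := blabel x2 x3.
have h1 : x1 = (x0 * r1)%g := labK x0 x1.
have h2 : x2 = (x1 * r2)%g := labK _ _.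
have h3' : x3 = (x2 * r3)%g := labK _ _.
have t1 : is_transp r1 by case/andP: e1.
have t2 : is_transp r2 by case/andP: e2.
have t3 : is_transp r3 by case/andP: e3.
have er1 : r1 = blabel x0 x1 by [].
have er2 : r2 = blabel x1 x2 by [].
have er3 : r3 = blabel x2 x3 by [].
clearbody r1 r2 r3.
have l01 := bedge_lt e1; have l12 := bedge_lt e2; have l23 := bedge_lt e3.
have n12 : r1 != r2.
  apply/eqP => e; have : x2 = x0. by rewrite h2 h1 -mulgA -e (transp2 t1) mulg1.
  by move=> ex; move: (ltn_trans l01 l12); rewrite ex ltnn.
have n23 : r2 != r3.
  apply/eqP => e; have : x3 = x1 by rewrite h3' h2 -mulgA -e (transp2 t2) mulg1.
  by move=> ex; move: (ltn_trans l12 l23); rewrite ex ltnn.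
have ht3 : t = (r1 * r2 * r3)%g by apply: (mulgI x0); rewrite -h3 h3' h2 h1 !mulgA.
have eqa : (r1 * r2 = t * r3)%g by rewrite ht3 -!mulgA (transp2 t3) mulg1.
have eqb : (r2 * r3 = r1 * t)%g by rewrite ht3 !mulgA (transp2 t1) mul1g.
have nt3 : t != r3.
  apply/eqP => e; have : r1 = r2 by rewrite -[r1]mulg1 -(transp2 t2) mulgA eqa e (transp2 t3) mul1g.
  by move/eqP; rewrite (negbTE n12).
have n1t : r1 != t.
  apply/eqP => e; have : r2 = r3 by rewrite -[r2]mulg1 -(transp2 t3) mulgA eqb -e (transp2 t1) mul1g.
  by move/eqP; rewrite (negbTE n23).
have E1 : mv r1 :|: mv r2 = mv t :|: mv r3 by rewrite -!mv_mul // eqa.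
have E2 : mv r2 :|: mv r3 = mv r1 :|: mv t by rewrite -!mv_mul // eqb.
case: (boolP [disjoint mv r1 & mv r2]) => hd.
  exfalso.
  have s13 : mv r1 \subset mv r3.
    apply/subsetP => k hk.
    have : k \in mv r2 :|: mv r3 by rewrite E2 inE hk.
    by rewrite inE (disjointFr hd hk).
  have e13 : r1 = r3 by apply: mv_eq => //; apply/eqP; rewrite eqEcard s13 !card_mv.
  case: (bedge_lab e1) => i [j [hij hl _ hp]].
  rewrite -er1 in hl.
  have e3' : bedge x2 (x2 * tperm i j) by rewrite -hl e13 -h3'.
  have := bedge_tperm e3' hij.
  have hi : i \in mv r1 by rewrite hl mv_tperm ?transp_ne // !inE eqxx.
  have hj : j \in mv r1 by rewrite hl mv_tperm ?transp_ne // !inE eqxx orbT.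
  have fi : r2 i = i by apply: mv_fix; rewrite (disjointFr hd hi).
  have fj : r2 j = j by apply: mv_fix; rewrite (disjointFr hd hj).
  rewrite h2 h1 !posM (transpV t1) (transpV t2) fi fj hl tpermL tpermR.
  by rewrite ltnNge ltnW.
move: hd; rewrite -setI_eq0 => /set0Pn [z hz].
set Y := mv r1 :|: mv r2.
have cI : #|mv r1 :&: mv r2| = 1.
  have le2 : #|mv r1 :&: mv r2| <= 2 by rewrite -(card_mv t1); apply: subset_leq_card; apply: subsetIl.
  have ge1 : 0 < #|mv r1 :&: mv r2| by apply/card_gt0P; exists z.
  suff : #|mv r1 :&: mv r2| != 2 by move: le2 ge1; clear; lia.
  apply/negP => /eqP c2.
  have ea : mv r1 :&: mv r2 = mv r1 by apply/eqP; rewrite eqEcard subsetIl card_mv // c2.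
  have eb : mv r1 :&: mv r2 = mv r2 by apply/eqP; rewrite eqEcard subsetIr card_mv // c2.
  by move: n12; rewrite (mv_eq t1 t2 (etrans (esym ea) eb)) eqxx.
have cY : #|Y| = 3 by rewrite /Y cardsU cI !card_mv.
have sT : mv t \subset Y by rewrite /Y E1 subsetUl.
have s3 : mv r3 \subset Y by rewrite /Y E1 subsetUr.
have i01 : #|invs Y x0| < #|invs Y x1| by apply: step_incr e1 _; rewrite -er1 subsetUl.
have i12 : #|invs Y x1| < #|invs Y x2| by apply: step_incr e2 _; rewrite -er2 subsetUr.
have i23 : #|invs Y x2| < #|invs Y x3| by apply: step_incr e3 _; rewrite -er3.
have b3 := leq_trans (subset_leq_card (invs_pairs Y x3)) (pairs3 cY).
have z0 : invs Y x0 = set0 by apply: cards0_eq; move: i01 i12 i23 b3; clear; clearbody Y; lia.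
have f3 : invs Y x3 = pairs Y.
  apply/eqP; rewrite eqEcard invs_pairs /=.
  apply: leq_trans (pairs3 cY) _; apply: (leq_trans _ i23).
  rewrite ltnS; apply: leq_trans _ i12; rewrite ltnS; exact: leq_trans _ i01.
exists Y; split => //.
- by rewrite subsetUl subsetUr.
- move=> k l hk hl hkl; split.
    have : (k, l) \notin invs Y x0 by rewrite z0 inE.
    rewrite inE /= hk hl hkl /= -leqNgt leq_eqVlt => /orP [/eqP e|//].
    by move: hkl; rewrite (perm_inj (val_inj e)) ltnn.
  have : (k, l) \in invs Y x3 by rewrite f3 inE /= hk hl hkl.
  by rewrite inE /= => /and4P [].
- set e := (fun a b => (r1 a == b) || (r2 a == b)).
  have esym : connect_sym e.
    apply: sym_connect_sym => a b; rewrite /e.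
    by congr orb; apply/eqP/eqP => <-; rewrite transpK.
  have hz1 : z \in mv r1 by move: hz; rewrite inE => /andP [].
  have hz2 : z \in mv r2 by move: hz; rewrite inE => /andP [].
  have cz : forall k, k \in Y -> connect e k z.
    move=> k; rewrite inE => /orP [hk|hk].
      case/orP: (mv_in2 t1 hk hz1) => /eqP ->; first exact: connect0.
      by apply: connect1; rewrite /e eqxx.
    case/orP: (mv_in2 t2 hk hz2) => /eqP ->; first exact: connect0.
    by apply: connect1; rewrite /e eqxx orbT.
  move=> k l hk hl; apply: connect_trans (cz k hk) _.
  by rewrite esym; apply: cz.
Qed.

End Tri.


Section Paths.
Variable n : nat.
Local Notation perm := {perm 'I_n}.
Local Notation path_t := {ffun 'I_5 -> perm}.
Implicit Types (p q : path_t).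

Lemma prvE (k : 'I_4) : prv k = inord k.
Proof. apply: val_inj => /=. rewrite inordK //. by apply: ltn_trans (ltn_ord k) _. Qed.

Lemma nxtE (k : 'I_4) : nxt k = inord k.+1.
Proof. apply: val_inj => /=. rewrite inordK. by rewrite /bump add1n. exact: ltn_ord k. Qed.

Definition P p (m : nat) : perm := p (inord m).
Definition lab p (m : nat) : perm := blabel (P p m) (P p m.+1).

Lemma bpathE p : bpath p -> forall m, m < 4 -> bedge (P p m) (P p m.+1).
Proof.
move=> /forallP hp m hm; have := hp (Ordinal hm).
by rewrite prvE nxtE.
Qed.

Lemma bpath_lt p : bpath p -> forall i j, i < j -> j <= 4 -> blen (P p i) < blen (P p j).
Proof.
move=> hp i j hij; elim: j hij => [//|j IH] hij hj.
have e := bedge_lt (bpathE hp hj).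
case: (ltngtP i j) => [h|h|e0].
- exact: ltn_trans (IH h (ltnW hj)) e.
- by move: hij; rewrite ltnS leqNgt h.
- by rewrite e0.
Qed.

Lemma lab_transp p m : bpath p -> m < 4 -> is_transp (lab p m).
Proof. by move=> hp hm; case/andP: (bpathE hp hm). Qed.

Lemma PS p m : P p m.+1 = (P p m * lab p m)%g.
Proof. exact: labK. Qed.

Lemma Pord p (i : 'I_5) : p i = P p i.
Proof. by rewrite /P inord_val. Qed.

End Paths.


Section Flip.
Variable n : nat.
Local Notation perm := {perm 'I_n}.
Local Notation path_t := {ffun 'I_5 -> perm}.
Implicit Types (p q : path_t).

Lemma flip_conn (t1 t2 t1' t2' : perm) (e : rel 'I_n) :
  is_transp t1 -> is_transp t2 -> is_transp t1' -> is_transp t2' -> t1' != t2' ->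
  (t1 * t2 = t1' * t2')%g ->
  (forall a, e a (t1 a)) -> (forall a, e a (t2 a)) -> connect_sym e ->
  forall a, connect e a (t1' a) /\ connect e a (t2' a).
Proof.
move=> h1 h2 h1' h2' hne hw e1 e2 es.
set w := (t1 * t2)%g.
have cw : forall a, connect e a (w a).
  move=> a; rewrite /w permM; apply: connect_trans (connect1 (e1 a)) (connect1 (e2 _)).
have ht2 : forall a, t2' a = w (t1' a).
  by move=> a; rewrite /w hw permM transpK.
have c1 : forall a, connect e a (t1' a).
  move=> a; apply/negPn/negP => hna.
  set y := t1' a in hna.
  have hya : y != a by apply: contraNneq hna => ->; exact: connect0.
  have m1 : t2' a != a.
    rewrite ht2 -/y; apply: contraNneq hna => hwy.
    by rewrite es -hwy; apply: cw.
  have m2 : t2' y != y.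
    rewrite ht2 /y transpK //; apply: contraNneq hna => hwy.
    by rewrite /y -hwy; apply: cw.
  have hy : y \in mv t2' by rewrite inE.
  have ha : a \in mv t2' by rewrite inE.
  case/orP: (mv_in2 h2' ha hy) => /eqP e0; first by move: hya; rewrite e0 eqxx.
  by move: hne; rewrite (transp_eq h1' (hya : t1' a != a)) -/y e0 -(transp_eq h2' m1) eqxx.
move=> a; split => //.
rewrite ht2; apply: connect_trans (c1 a) (cw _).
Qed.


Definition E p : rel 'I_n := fun a b => [exists k : 'I_4, lab p k a == b].

Lemma E_sym p : bpath p -> connect_sym (E p).
Proof.
move=> bp; apply: sym_connect_sym => a b; rewrite /E.
apply/existsP/existsP => -[k /eqP hk]; exists k; apply/eqP;
  by rewrite -hk transpK // lab_transp.
Qed.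

Lemma flip_sym p q : flip_step p q -> flip_step q p.
Proof.
case/and3P=> bp bq /existsP [i /and4P [h0 h4 hne /forallP hall]].
apply/and3P; split => //; apply/existsP; exists i; apply/and4P; split => //.
  by rewrite eq_sym.
by apply/forallP => j; rewrite [q j == _]eq_sym; apply: hall.
Qed.

Lemma flip_agree p q : flip_step p q -> [/\ bpath p, bpath q &
  exists m, [/\ 0 < m, m < 4 & forall j, j != m -> P p j = P q j]].
Proof.
case/and3P=> bp bq /existsP [i /and4P [h0 h4 hne /forallP hall]].
split => //; exists i; split => // j hj.
apply/eqP; rewrite /P; move: (hall (inord j)) => /implyP; apply.
apply: contra hj => /eqP ei.
case: (ltnP j 5) => hj5; first by rewrite -ei inordK.
suff e : (inord j : 'I_5) = ord0 by move: h0; rewrite -ei e.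
apply: val_inj => /=; rewrite /inord /insubd insubF //; by rewrite ltnNge hj5.
Qed.


Lemma flip_E p q : flip_step p q -> forall a b, E q a b -> connect (E p) a b.
Proof.
case/flip_agree => bp bq [m [m0 m4 hag]] a b; rewrite /E => /existsP [k /eqP hk].
case: (boolP (((k : nat).+1 != m) && ((k : nat) != m))) => hc.
  case/andP: hc => hc1 hc2.
  apply: connect1; apply/existsP; exists k; apply/eqP; rewrite -hk /lab.
  by rewrite (hag _ hc1) (hag _ hc2).
case: m m0 m4 hag hc => [//|m'] _ m4 hag hc.
set t1 := lab p m'; set t2 := lab p m'.+1; set t1' := lab q m'; set t2' := lab q m'.+1.
have m3 : m' < 4 by apply: ltn_trans m4.
have tr1 : is_transp t1 by apply: lab_transp.
have tr2 : is_transp t2 by apply: lab_transp.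
have tr1' : is_transp t1' by apply: lab_transp.
have tr2' : is_transp t2' by apply: lab_transp.
have hw : (t1 * t2 = t1' * t2')%g.
  apply: (mulgI (P p m')); rewrite /t1 /t2 /t1' /t2' mulgA -PS -PS.
  have n1 : m'.+2 != m'.+1 by rewrite neq_ltn ltnSn orbT.
  have n2 : m' != m'.+1 by rewrite neq_ltn ltnSn.
  by rewrite (hag _ n1) (hag _ n2) mulgA -PS -PS.
have hne : t1' != t2'.
  apply/eqP => e.
  have ee : P q m'.+2 = (P q m' * (t1' * t2'))%g by rewrite /t1' /t2' mulgA -PS -PS.
  rewrite -e (transp2 tr1') mulg1 in ee.
  by move: (bpath_lt bq (leqW (ltnSn m')) m4); rewrite ee ltnn.
have e1 : forall a, E p a (t1 a).
  by move=> x; apply/existsP; exists (Ordinal m3) => /=.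
have e2 : forall a, E p a (t2 a).
  by move=> x; apply/existsP; exists (Ordinal m4) => /=.
have [c1 c2] := flip_conn tr1 tr2 tr1' tr2' hne hw e1 e2 (E_sym bp) a.
move: hc; rewrite negb_and !negbK => /orP [/eqP ek|/eqP ek].
  by move: hk; rewrite -[k : nat]/(k.+1.-1) ek /= => <-.
by move: hk; rewrite ek => <-.
Qed.


Lemma flip_ends p q : flip_step p q -> P q 0 = P p 0 /\ P q 4 = P p 4.
Proof.
case/flip_agree => _ _ [m [m0 m4 hag]].
by split; apply/esym/hag; rewrite neq_ltn ?m0 ?m4 ?orbT.
Qed.

Lemma flip_conn_eq p q : flip_step p q -> forall a b, connect (E q) a b = connect (E p) a b.
Proof.
move=> hf a b; apply/idP/idP; apply: connect_sub.
  exact: flip_E.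
exact: flip_E (flip_sym hf).
Qed.

Lemma class_props p q : bpath p -> connect (@flip_step n 4) p q ->
  [/\ bpath q, P q 0 = P p 0, P q 4 = P p 4 &
      forall a b, connect (E q) a b = connect (E p) a b].
Proof.
move=> bp /connectP [s hs ->]; elim: s p bp hs => [|r s IH] p bp /=.
  by [].
case/andP=> hpr hs.
have br : bpath r by case/and3P: hpr.
have [b1 b2 b3 b4] := IH r br hs.
have [f0 f4] := flip_ends hpr.
split => //; first by rewrite b2 f0.
  by rewrite b3 f4.
by move=> a b; rewrite b4 (flip_conn_eq hpr).
Qed.

End Flip.


Section Hard.
Variable n : nat.
Local Notation perm := {perm 'I_n}.
Local Notation path_t := {ffun 'I_5 -> perm}.
Implicit Types (p q : path_t).

Lemma hard13 q q' : bpath q -> bpath q' -> P q 0 = P q' 0 -> P q 4 = P q' 4 ->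
  P q 1 = P q' 3 -> (forall a b, connect (E q) a b = connect (E q') a b) -> False.
Proof.
move=> bq bq' e0 e4 e13 ec.
have ht : is_transp (lab q 0) by apply: lab_transp.
have ht' : is_transp (lab q' 3) by apply: lab_transp.
have [Y [cY sT _ hY cc]] : exists Y : {set 'I_n}, [/\ #|Y| = 3, mv (lab q 0) \subset Y,
    [/\ mv (lab q' 0) \subset Y, mv (lab q' 1) \subset Y & mv (lab q' 2) \subset Y],
    (forall k l, k \in Y -> l \in Y -> k < l -> (P q' 0)^-1%g k < (P q' 0)^-1%g l /\
        (P q' 3)^-1%g l < (P q' 3)^-1%g k) &
    (forall k l, k \in Y -> l \in Y ->
       connect (fun a b => (lab q' 0 a == b) || (lab q' 1 a == b)) k l)].
  apply: triangle => //; try exact: bpathE.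
  by rewrite -e13 PS e0.
have [Y' [cY' _ [s1 s2 s3] hY' _]] : exists Y : {set 'I_n}, [/\ #|Y| = 3, mv (lab q' 3) \subset Y,
    [/\ mv (lab q 1) \subset Y, mv (lab q 2) \subset Y & mv (lab q 3) \subset Y],
    (forall k l, k \in Y -> l \in Y -> k < l -> (P q 1)^-1%g k < (P q 1)^-1%g l /\
        (P q 4)^-1%g l < (P q 4)^-1%g k) &
    (forall k l, k \in Y -> l \in Y ->
       connect (fun a b => (lab q 1 a == b) || (lab q 2 a == b)) k l)].
  apply: triangle => //; try exact: bpathE.
  by rewrite e4 PS e13.
have nopair : forall k l, k \in Y -> l \in Y -> k \in Y' -> l \in Y' -> k != l -> False.
  have core : forall k l, k \in Y -> l \in Y -> k \in Y' -> l \in Y' -> k < l -> False.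
    move=> k l kY lY kY' lY' hkl.
    have [_ h1] := hY k l kY lY hkl; have [h2 _] := hY' k l kY' lY' hkl.
    by move: h1; rewrite -e13 ltnNge ltnW.
  move=> k l kY lY kY' lY' hkl; case: (ltngtP k l) => h.
  - exact: core h.
  - exact: core h.
  - by move: hkl; rewrite (val_inj h) eqxx.
set t := lab q 0 in ht sT.
have [f fY fT] : exists2 f, f \in Y & f \notin mv t.
  apply/subsetPn; apply: contraTN isT => hs.
  by have := subset_leq_card hs; rewrite cY card_mv.
have [al alT] : exists al, al \in mv t.
  by apply/card_gt0P; rewrite card_mv.
have alY : al \in Y by apply: (subsetP sT).
have c1 : connect (E q') al f.
  apply: connect_sub (cc al f alY fY) => x y /orP [] /eqP hxy; apply: connect1; apply/existsP.
    by exists ord0; rewrite hxy.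
  by exists (inord 1); rewrite inordK // hxy.
rewrite -ec in c1.
set Z := if [disjoint mv t & Y'] then mv t else mv t :|: Y'.
have tZ : mv t \subset Z by rewrite /Z; case: ifP => _; rewrite ?subxx ?subsetUl.
have clZ : forall x y, E q x y -> x \in Z -> y \in Z.
  move=> x y /existsP [k /eqP hk] xZ.
  case: (eqVneq (lab q k x) x) => [e|ne]; first by rewrite -hk e.
  have kt : is_transp (lab q k) by apply: lab_transp.
  have xm : x \in mv (lab q k) by rewrite inE.
  have ym : y \in mv (lab q k) by rewrite -hk mv_img.
  case: k hk xm ym kt ne => [[|[|[|[|m]]]] hk4] hk xm ym kt ne; last by [].
  - by apply: (subsetP tZ).
  - move: xZ; rewrite /Z; case: ifP => hd.
      by move=> xt; move: (disjointFr hd xt); rewrite (subsetP s1 x xm).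
    by move=> _; rewrite inE (subsetP s1 y ym) orbT.
  - move: xZ; rewrite /Z; case: ifP => hd.
      by move=> xt; move: (disjointFr hd xt); rewrite (subsetP s2 x xm).
    by move=> _; rewrite inE (subsetP s2 y ym) orbT.
  - move: xZ; rewrite /Z; case: ifP => hd.
      by move=> xt; move: (disjointFr hd xt); rewrite (subsetP s3 x xm).
    by move=> _; rewrite inE (subsetP s3 y ym) orbT.
have hcl := intro_closed (E_sym bq) clZ.
have fZ : f \in Z by rewrite -(closed_connect hcl c1) (subsetP tZ).
move: fZ; rewrite /Z; case: ifP => hd.
  by rewrite (negbTE fT).
rewrite inE (negbTE fT) /= => fY'.
move: hd => /negbT; rewrite -setI_eq0 => /set0Pn [g]; rewrite inE => /andP [gT gY'].
apply: (nopair f g fY (subsetP sT g gT) fY' gY').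
by apply: contraNneq fT => ->.
Qed.


Lemma odd_transp (s : perm) : is_transp s -> odd_perm s = true.
Proof. by case/transpP=> i [j [hij ->]]; rewrite odd_tperm transp_ne. Qed.

Lemma core q q' i j : bpath q -> bpath q' -> P q 0 = P q' 0 -> P q 4 = P q' 4 ->
  (forall a b, connect (E q) a b = connect (E q') a b) ->
  i < j -> j <= 4 -> P q i = P q' j -> False.
Proof.
move=> bq bq' e0 e4 ec hij hj eij.
case: i hij eij => [|i] hij eij.
  by move: (bpath_lt bq' hij hj); rewrite -eij e0 ltnn.
have [hj4|ej4] : j < 4 \/ j = 4 by move: hj; clear; lia.
2: subst j; by move: (bpath_lt bq hij (leqnn 4)); rewrite eij e4 ltnn.
case: i hij eij => [|[|i]] hij eij.
- case: j hij hj hj4 eij => [|[|[|[|j]]]] // _ _ _ eij.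
  +
    have : lab q 0 = (lab q' 0 * lab q' 1)%g.
      apply: (mulgI (P q 0)); rewrite -PS eij e0 mulgA -PS -PS //.
    move/(congr1 (@odd_perm _)); rewrite odd_permM !odd_transp //; exact: lab_transp.
  +
    exact: hard13 bq bq' e0 e4 eij ec.
- case: j hij hj hj4 eij => [|[|[|[|j]]]] // _ _ _ eij.
  have : lab q' 3 = (lab q 2 * lab q 3)%g.
    apply: (mulgI (P q' 3)); rewrite -PS -e4 -eij mulgA -PS -PS //.
  move/(congr1 (@odd_perm _)); rewrite odd_permM !odd_transp //; exact: lab_transp.
- by move: hij hj4; clear; lia.
Qed.

End Hard.


Lemma time_uniq n (p q q' : {ffun 'I_5 -> {perm 'I_n}}) (i j : 'I_5) : bpath p ->
  connect (@flip_step n 4) p q -> connect (@flip_step n 4) p q' -> q i = q' j -> i = j.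
Proof.
move=> bp hq hq'.
have [bq q0 q4 qc] := class_props bp hq.
have [bq' q0' q4' qc'] := class_props bp hq'.
rewrite !Pord => e.
have e0 : P q 0 = P q' 0 by rewrite q0 q0'.
have e4 : P q 4 = P q' 4 by rewrite q4 q4'.
have ec : forall a b, connect (E q) a b = connect (E q') a b by move=> a b; rewrite qc qc'.
have hj : (j : nat) <= 4 by rewrite -ltnS.
have hi : (i : nat) <= 4 by rewrite -ltnS.
case: (ltngtP i j) => h.
- by exfalso; apply: (core bq bq' e0 e4 ec h hj e).
- exfalso; apply: (core bq' bq (esym e0) (esym e4) _ h hi (esym e)).
  by move=> a b; rewrite ec.
- exact: val_inj.
Qed.

Theorem proposition7p7 (n : nat) (F : {set {ffun 'I_5 -> {perm 'I_n}}}) :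
  flipclass F ->
  lgraph_iso (supV F) (supE F) (tsupV F) (tsupE F).
Proof.
case=> p [bp eF].
have uniq : forall q q' (i j : 'I_5), q \in F -> q' \in F -> q i = q' j -> i = j.
  move=> q q' i j; rewrite eF !inE; exact: time_uniq.
pose time (a : {perm 'I_n}) : 'I_5 := odflt ord0 [pick i : 'I_5 | [exists q in F, q i == a]].
have tm : forall q i, q \in F -> time (q i) = i.
  move=> q i hq; rewrite /time; case: pickP => [j /existsP [q' /andP [hq' /eqP e]]|none] /=.
    exact: uniq e.
  by move: (none i); rewrite (_ : [exists q0 in F, q0 i == q i] = true) //; apply/existsP; exists q; rewrite hq eqxx.
exists (fun a => (a, time a)); split.
- by move=> a b _ _ [].
- apply/setP => -[a i]; apply/imsetP/bigcupP.
    case=> b /bigcupP [q hq /imsetP [j _ ->]] [-> ->].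
    by exists q => //; apply/imsetP; exists j => //; rewrite tm.
  case=> q hq /imsetP [j _ [-> ->]].
  exists (q j); last by rewrite tm.
  by apply/bigcupP; exists q => //; apply/imsetP; exists j.
- move=> e /bigcupP [q hq /imsetP [i _ ->]] /=.
  by apply/andP; split; apply/bigcupP; exists q => //; apply/imsetP; [exists (prv i)|exists (nxt i)].
- move=> e /bigcupP [q hq /imsetP [i _ ->]] /=.
  by apply/andP; split; apply/bigcupP; exists q => //; apply/imsetP; [exists (prv i)|exists (nxt i)].
- move=> a b t _ _; apply/bigcupP/bigcupP.
    case=> q hq /imsetP [i _ [-> -> ->]].
    by exists q => //; apply/imsetP; exists i => //; rewrite !tm.
  case=> q hq /imsetP [i _ [-> e1 -> e2]].
  by exists q => //; apply/imsetP; exists i => //; rewrite e2.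
Qed.
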